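(* Let $A$ be a finite skew brace which is left nilpotent and of nilpotent type (i.e. $(A,+)$ is a nilpotent group). Then each of the graphs $\Lambda(A)$ and $\Theta(A)$ is connected and has diameter at most $2$.
   Context: A skew brace is a triple $(A,+,\circ)$ where $(A,+)$ and $(A,\circ)$ are groups (same identity $0$) with $a\circ(b+c)=a\circ b-a+a\circ c$ for all $a,b,c\in A$. The map $\lambda\colon(A,\circ)\to\operatorname{Aut}(A,+)$, $\lambda_a(b)=-a+a\circ b$, is an action by automorphisms; $\theta$ is the action of the semidirect product $(A,+)\rtimes_\lambda(A,\circ)$ on $(A,+)$ given by $\theta_{(a,b)}(c)=a+\lambda_b(c)-a$. For $a,b\in A$ let $a*b=\lambda_a(b)-b$, and for subsets $X,Y$ let $X*Y$ be the additive subgroup generated by all $x*y$. Set $A^1=A$, $A^{n+1}=A*A^n$; $A$ is left nilpotent if $A^n=\{0\}$ for some $n$. For a finite skew brace, $\Lambda(A)$ (resp. $\Theta(A)$) is the graph whose vertices are the $\lambda$-orbits (resp. $\theta$-orbits) in $A$ of size $>1$, two distinct vertices $L_1,L_2$ being adjacent iff $\gcd(|L_1|,|L_2|)\ne 1$. *)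

(* Defs.v *)
From HB Require Import structures.
From mathcomp Require Import all_boot all_order all_fingroup all_solvable.
Set Implicit Arguments. Unset Strict Implicit. Unset Printing Implicit Defensive.

Local Open Scope group_scope.

(* A finite skew brace (A,+,o) is modelled on a finGroupType gT: the additive
   group (A,+) is the group structure of gT (written multiplicatively:
   a + b  ~  a * b,  -a  ~  a^-1,  0  ~  1), and the circle operation is a
   separate binary operation [circ] on gT. *)

Definition is_skew_brace (gT : finGroupType) (circ : gT -> gT -> gT) : Prop :=
  [/\ (forall a b c, circ a (circ b c) = circ (circ a b) c),
      (forall a, circ 1 a = a /\ circ a 1 = a),
      (forall a, exists b, circ a b = 1 /\ circ b a = 1) &
      (forall a b c, circ a (b * c) = circ a b * a^-1 * circ a c)].

Definition blam (gT : finGroupType) (circ : gT -> gT -> gT) (a b : gT) : gT :=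
  a^-1 * circ a b.

Definition bstar (gT : finGroupType) (circ : gT -> gT -> gT) (a b : gT) : gT :=
  blam circ a b * b^-1.

Definition bstar_set (gT : finGroupType) (circ : gT -> gT -> gT)
  (X Y : {set gT}) : {set gT} :=
  <<[set bstar circ x y | x in X, y in Y]>>.

(* A^1 = A, A^{n+1} = A * A^n  (bpow circ n = A^{n+1}) *)
Fixpoint bpow (gT : finGroupType) (circ : gT -> gT -> gT) (n : nat) : {set gT} :=
  if n is n'.+1 then bstar_set circ [set: gT] (bpow circ n') else [set: gT].

Definition left_nilpotent (gT : finGroupType) (circ : gT -> gT -> gT) : Prop :=
  exists n, bpow circ n = 1.

Definition lam_orbit (gT : finGroupType) (circ : gT -> gT -> gT) (x : gT)
  : {set gT} := [set blam circ a x | a in [set: gT]].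

Definition theta_orbit (gT : finGroupType) (circ : gT -> gT -> gT) (c : gT)
  : {set gT} := [set a * blam circ b c * a^-1 | a in [set: gT], b in [set: gT]].

Definition orbit_vertices (gT : finGroupType) (orb : gT -> {set gT})
  : {set {set gT}} :=
  [set L in [set orb x | x in [set: gT]] | 1 < #|L|]%N.

Definition orbit_adj (gT : finGroupType) (V : {set {set gT}}) : rel {set gT} :=
  fun L1 L2 => [&& L1 \in V, L2 \in V, L1 != L2 & gcdn #|L1| #|L2| != 1]%N.

Definition connected_diam_le2 (gT : finGroupType) (V : {set {set gT}}) : Prop :=
  (forall L1 L2, L1 \in V -> L2 \in V -> connect (orbit_adj V) L1 L2) /\
  (forall L1 L2, L1 \in V -> L2 \in V ->
     L1 = L2 \/ orbit_adj V L1 L2 \/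
     exists L3, orbit_adj V L1 L3 && orbit_adj V L3 L2).

Definition Lambda_graph_vertices (gT : finGroupType) (circ : gT -> gT -> gT) :=
  orbit_vertices (lam_orbit circ).
Definition Theta_graph_vertices (gT : finGroupType) (circ : gT -> gT -> gT) :=
  orbit_vertices (theta_orbit circ).

(* Main.v *)
Require Import Defs.
From mathcomp Require Import all_boot all_order all_fingroup all_solvable.
From Stdlib Require Import Classical.
Set Implicit Arguments. Unset Strict Implicit. Unset Printing Implicit Defensive.
Local Open Scope group_scope.

Lemma sb_c1l (gT : finGroupType) (circ : gT -> gT -> gT) (H : is_skew_brace circ) a :
  circ 1 a = a.
Proof. by case: H => _ h _ _; case: (h a). Qed.
Lemma sb_c1r (gT : finGroupType) (circ : gT -> gT -> gT) (H : is_skew_brace circ) a :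
  circ a 1 = a.
Proof. by case: H => _ h _ _; case: (h a). Qed.
Lemma sb_cA (gT : finGroupType) (circ : gT -> gT -> gT) (H : is_skew_brace circ) a b c :
  circ a (circ b c) = circ (circ a b) c.
Proof. by case: H => h _ _ _. Qed.
Lemma sb_dist (gT : finGroupType) (circ : gT -> gT -> gT) (H : is_skew_brace circ) a b c :
  circ a (b * c) = circ a b * a^-1 * circ a c.
Proof. by case: H => _ _ _ h. Qed.
Lemma sb_inv (gT : finGroupType) (circ : gT -> gT -> gT) (H : is_skew_brace circ) a :
  exists b, circ a b = 1 /\ circ b a = 1.
Proof. by case: H => _ _ h _. Qed.

Lemma circ_inj (gT : finGroupType) (circ : gT -> gT -> gT) (H : is_skew_brace circ) a :
  injective (circ a).
Proof.
move=> x y e; have [b [_ hb]] := sb_inv H a.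
by rewrite -(sb_c1l H x) -(sb_c1l H y) -hb -!(sb_cA H) e.
Qed.

Lemma blamM (gT : finGroupType) (circ : gT -> gT -> gT) (H : is_skew_brace circ) a x y :
  blam circ a (x * y) = blam circ a x * blam circ a y.
Proof. by rewrite /blam (sb_dist H) !mulgA. Qed.

Lemma blam1 (gT : finGroupType) (circ : gT -> gT -> gT) (H : is_skew_brace circ) a :
  blam circ a 1 = 1.
Proof. by rewrite /blam (sb_c1r H) mulVg. Qed.

Lemma blamV (gT : finGroupType) (circ : gT -> gT -> gT) (H : is_skew_brace circ) a x :
  blam circ a x^-1 = (blam circ a x)^-1.
Proof.
apply: (@mulIg _ (blam circ a x)); by rewrite -(blamM H) !mulVg (blam1 H).
Qed.

Lemma blam_1 (gT : finGroupType) (circ : gT -> gT -> gT) (H : is_skew_brace circ) x :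
  blam circ 1 x = x.
Proof. by rewrite /blam invg1 mul1g (sb_c1l H). Qed.

Lemma blam_circ (gT : finGroupType) (circ : gT -> gT -> gT) (H : is_skew_brace circ) a b x :
  blam circ (circ a b) x = blam circ a (blam circ b x).
Proof.
have -> : blam circ b x = b^-1 * circ b x by [].
rewrite (blamM H) (blamV H) /blam (sb_cA H) invMg invgK !mulgA.
by rewrite mulgK.
Qed.

Lemma blam_inj (gT : finGroupType) (circ : gT -> gT -> gT) (H : is_skew_brace circ) a :
  injective (blam circ a).
Proof. by move=> x y; rewrite /blam => /mulgI /(circ_inj H). Qed.

Lemma blamX (gT : finGroupType) (circ : gT -> gT -> gT) (H : is_skew_brace circ) a x n :
  blam circ a (x ^+ n) = (blam circ a x) ^+ n.
Proof.
elim: n => [|n IH]; first by rewrite !expg0 (blam1 H).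
by rewrite !expgS (blamM H) IH.
Qed.

Lemma blam_pelt (gT : finGroupType) (circ : gT -> gT -> gT) (H : is_skew_brace circ) pi a x :
  pi.-elt x -> pi.-elt (blam circ a x).
Proof.
move=> px; apply: pnat_dvd px; rewrite order_dvdn -(blamX H) expg_order (blam1 H) //.
Qed.

Lemma circE (gT : finGroupType) (circ : gT -> gT -> gT) a b :
  circ a b = a * blam circ a b.
Proof. by rewrite /blam mulKVg. Qed.

Lemma memO (gT : finGroupType) pi (nG : nilpotent [set: gT]) x :
  (x \in 'O_pi([set: gT])) = pi.-elt x.
Proof.
have h1 := nilpotent_pcore_Hall pi nG.
have h2 := pcore_normal pi [set: gT].
apply: (mem_normal_Hall h1 h2); exact: in_setT.
Qed.

Lemma commO (gT : finGroupType) pi (nG : nilpotent [set: gT]) (x y : gT) :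
  pi.-elt x -> pi^'.-elt y -> commute x y.
Proof.
rewrite -!memO // => Hx Hy.
have [_ _ cAB _] := dprodP (nilpotent_pcoreC pi nG).
have := centsP cAB y Hy x Hx; first [done | move=> h; exact: (commute_sym h) | idtac].
Qed.

Lemma circO (gT : finGroupType) (circ : gT -> gT -> gT) (H : is_skew_brace circ)
  pi (nG : nilpotent [set: gT]) a b :
  a \in 'O_pi([set: gT]) -> b \in 'O_pi([set: gT]) -> circ a b \in 'O_pi([set: gT]).
Proof.
move=> Ha Hb; rewrite circE groupM // memO //; apply: (blam_pelt H).
by rewrite -memO.
Qed.

Definition cpow (gT : finGroupType) (circ : gT -> gT -> gT) (a : gT) n :=
  iter n (circ a) 1.

Definition muP (gT : finGroupType) (circ : gT -> gT -> gT) (H : is_skew_brace circ) a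
  : {perm gT} := perm (@circ_inj gT circ H a).

Lemma muPM (gT : finGroupType) (circ : gT -> gT -> gT) (H : is_skew_brace circ) a b :
  muP H a * muP H b = muP H (circ b a).
Proof. by apply/permP => x; rewrite permM !permE (sb_cA H). Qed.

Lemma muPX (gT : finGroupType) (circ : gT -> gT -> gT) (H : is_skew_brace circ) a n :
  muP H a ^+ n = muP H (cpow circ a n).
Proof.
elim: n => [|n IH].
  by apply/permP => x; rewrite expg0 perm1 permE /= (sb_c1l H).
by rewrite expgSr IH muPM.
Qed.

Lemma cpow_card (gT : finGroupType) (circ : gT -> gT -> gT) (H : is_skew_brace circ)
  (S : {group gT}) a :
  1 \in S -> (forall x y, x \in S -> y \in S -> circ x y \in S) ->
  a \in S -> cpow circ a #|S| = 1.
Proof.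
move=> S1 Sc aS.
have gM : group_set [set muP H x | x in S].
  apply/group_setP; split.
    apply/imsetP; exists 1 => //; apply/permP => x; rewrite perm1 permE (sb_c1l H) //.
  move=> _ _ /imsetP[x xS ->] /imsetP[y yS ->]; rewrite muPM.
  by apply/imsetP; exists (circ y x) => //; apply: Sc.
have cM : #|Group gM| = #|S|.
  rewrite /= card_imset // => x y e.
  by move: (congr1 (fun s : {perm gT} => s 1) e); rewrite !permE !(sb_c1r H).
have : muP H a ^+ #|Group gM| = 1 by apply: expg_cardG; apply/imsetP; exists a.
rewrite cM muPX => /(congr1 (fun s : {perm gT} => s 1)).
by rewrite permE perm1 (sb_c1r H).
Qed.

Lemma blam_cpow (gT : finGroupType) (circ : gT -> gT -> gT) (H : is_skew_brace circ) a n x :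
  blam circ (cpow circ a n) x = iter n (blam circ a) x.
Proof.
elim: n => [|n IH] /=; first by rewrite (blam_1 H).
by rewrite (blam_circ H) IH.
Qed.

Lemma cpowO (gT : finGroupType) (circ : gT -> gT -> gT) (H : is_skew_brace circ)
  pi (nG : nilpotent [set: gT]) a :
  pi.-elt a -> cpow circ a #|'O_pi([set: gT])| = 1.
Proof.
move=> pa; apply: (cpow_card H) => //; last by rewrite memO.
by move=> x y; apply: (circO H).
Qed.

Lemma blam_coprime (gT : finGroupType) (circ : gT -> gT -> gT) (H : is_skew_brace circ)
  (nG : nilpotent [set: gT]) (lnil : left_nilpotent circ) pi (c y : gT) :
  pi^'.-elt c -> pi.-elt y -> blam circ c y = y.
Proof.
move=> pc py.
set N := #|'O_pi^'([set: gT])|.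
have hN : forall x, iter N (blam circ c) x = x.
  by move=> x; rewrite -(blam_cpow H) (cpowO H) // (blam_1 H).
have pN : pi^'.-nat N := pcore_pgroup pi^' [set: gT].
case: lnil => n hn.
suff: forall m k, k + m = n -> forall x, x \in bpow circ k -> pi.-elt x ->
        blam circ c x = x.
  by move/(_ n 0 (add0n n) y); apply => //; rewrite /= in_setT.
elim=> [|m IH] k hk x.
  rewrite addn0 in hk; rewrite hk hn => /set1P -> _; exact: (blam1 H).
move=> xk px; set d := bstar circ c x.
have dk : d \in bpow circ k.+1.
  rewrite /= /bstar_set; apply: mem_gen; apply: imset2_f => //; exact: in_setT.
have pd : pi.-elt d.
  by rewrite -(memO _ nG) groupM ?groupV // (memO _ nG) // (blam_pelt H).
have dfix : blam circ c d = d by apply: (IH k.+1) => //; rewrite addSnnS.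
have bx : blam circ c x = d * x by rewrite /d /bstar mulgKV.
have it : forall j, iter j (blam circ c) x = d ^+ j * x.
  elim=> [|j IHj] /=; first by rewrite mul1g.
  by rewrite IHj (blamM H) (blamX H) dfix bx mulgA -expgSr.
have dN : d ^+ N = 1 by apply: (@mulIg _ x); rewrite mul1g -it hN.
have od : (#[d] = 1)%N.
  by apply: (pnat_1 pd); apply: pnat_dvd pN; rewrite order_dvdn dN.
have d1 : d = 1 by apply/eqP; rewrite -order_eq1 od.
by rewrite bx d1 mul1g.
Qed.

Lemma blam_constt (gT : finGroupType) (circ : gT -> gT -> gT) (H : is_skew_brace circ)
  (nG : nilpotent [set: gT]) (lnil : left_nilpotent circ) pi (b y : gT) :
  pi.-elt y -> blam circ b y = blam circ (b.`_pi) y.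
Proof.
move=> py; have [d [hd1 hd2]] := sb_inv H b.`_pi.
set c := blam circ d b.`_pi^'.
have cb : circ b.`_pi c = b.
  by rewrite circE /c -(blam_circ H) hd1 (blam_1 H) consttC.
rewrite -{1}cb (blam_circ H) (blam_coprime H nG lnil (pi:=pi) (c:=c) (y:=y)) //.
apply: (blam_pelt H); exact: p_elt_constt.
Qed.

Lemma gen_orb (gT : finGroupType) (G : {group {perm gT}}) (O : gT -> {set gT})
  (HO : forall x, O x = [set s x | s : {perm gT} in G]) x : O x = orbit 'P G x.
Proof. by rewrite HO /orbit; apply: eq_imset => s. Qed.

Lemma gen_homX (gT : finGroupType) (s : {perm gT})
  (hom : forall x y, s (x * y) = s x * s y) x k : s (x ^+ k) = s x ^+ k.
Proof.
have s1 : s 1 = 1 by apply: (@mulgI _ (s 1)); rewrite -hom !mulg1.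
elim: k => [|k IH]; first by rewrite !expg0.
by rewrite !expgS hom IH.
Qed.

Lemma gen_div (gT : finGroupType) (G : {group {perm gT}}) (O : gT -> {set gT})
  (hom : forall s, s \in G -> forall x y, s (x * y) = s x * s y)
  (HO : forall x, O x = [set s x | s : {perm gT} in G]) (pi : nat_pred) x :
  (#|O (x.`_pi)| %| #|O x|)%N.
Proof.
rewrite !(gen_orb HO) !card_orbit; apply: indexgS; apply/subsetP => s.
rewrite !inE !sub1set !inE /= => /andP[sG /eqP sx]; rewrite sG /=.
have /cycleP[k ->] := cycle_constt pi x.
by rewrite apermE (gen_homX (hom s sG)) -apermE sx.
Qed.

Lemma gen_fix (gT : finGroupType) (s : {perm gT})
  (hom : forall x y, s (x * y) = s x * s y) x :
  (forall p : nat, s (x.`_p) = x.`_p) -> s x = x.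
Proof.
move=> h.
have s1 : s 1 = 1 by apply: (@mulgI _ (s 1)); rewrite -hom !mulg1.
transitivity (s (\prod_(0 <= p < #[x].+1) x.`_p)); first by rewrite prod_constt.
rewrite (big_morph s hom s1).
transitivity (\prod_(0 <= p < #[x].+1) x.`_p); last by rewrite prod_constt.
by apply: eq_bigr => p _; apply: h.
Qed.

Lemma gen_nontriv (gT : finGroupType) (G : {group {perm gT}}) (O : gT -> {set gT})
  (hom : forall s, s \in G -> forall x y, s (x * y) = s x * s y)
  (HO : forall x, O x = [set s x | s : {perm gT} in G])
  (HP : forall (pi : nat_pred) y, pi.-elt y -> pi.-nat #|O y|) x :
  (1 < #|O x|)%N -> exists p : nat, prime p /\ (p %| #|O (x.`_p)|)%N.
Proof.
move=> gt1.
have [s [sG sx]] : exists s, s \in G /\ s x <> x.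
  apply: NNPP => hn; move: gt1.
  suff -> : O x = [set x] by rewrite cards1.
  apply/setP => y; rewrite HO inE; apply/imsetP/eqP => [[s sG ->]|->].
    by apply: NNPP => ne; apply: hn; exists s.
  by exists 1; rewrite ?group1 ?perm1.
have [p hp] : exists p : nat, s (x.`_p) <> x.`_p.
  apply: NNPP => hn; apply: sx; apply: (gen_fix (hom s sG)) => p.
  by apply: NNPP => ne; apply: hn; exists p.
have g1 : (1 < #|O (x.`_p)|)%N.
  apply/card_gt1P; exists (x.`_p), (s (x.`_p)); split.
  - by rewrite HO; apply/imsetP; exists 1; rewrite ?group1 ?perm1.
  - by rewrite HO; apply/imsetP; exists s.
  - by apply/eqP => e; apply: hp.
have pn := HP p _ (p_elt_constt p x).
have qp : pdiv #|O (x.`_p)| \in (p : nat_pred).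
  by apply: (pnatPpi pn); rewrite pi_pdiv.
move: qp; rewrite inE => /eqP qp.
exists p; split; first by rewrite -qp pdiv_prime.
by rewrite -{1}qp pdiv_dvd.
Qed.

Lemma gcd_ne1 p m n : prime p -> (p %| m)%N -> (p %| n)%N -> gcdn m n != 1%N.
Proof.
move=> pp pm pn; apply/eqP => g.
have := dvdn_gcd p m n; rewrite pm pn g dvdn1 => /eqP p1.
by move: (prime_gt1 pp); rewrite p1.
Qed.

Lemma gen_main (gT : finGroupType) (nG : nilpotent [set: gT])
  (G : {group {perm gT}}) (O : gT -> {set gT})
  (hom : forall s, s \in G -> forall x y, s (x * y) = s x * s y)
  (HO : forall x, O x = [set s x | s : {perm gT} in G])
  (HP : forall (pi : nat_pred) y, pi.-elt y -> pi.-nat #|O y|) :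
  connected_diam_le2 (orbit_vertices O).
Proof.
have memO : forall z, z \in O z.
  by move=> z; rewrite HO; apply/imsetP; exists 1; rewrite ?group1 ?perm1.
have diam : forall L1 L2, L1 \in orbit_vertices O -> L2 \in orbit_vertices O ->
     L1 = L2 \/ orbit_adj (orbit_vertices O) L1 L2 \/
     exists L3, orbit_adj (orbit_vertices O) L1 L3 && orbit_adj (orbit_vertices O) L3 L2.
  move=> L1 L2 V1 V2.
  case/setIdP: (V1) => /imsetP[x _ ex] gx; case/setIdP: (V2) => /imsetP[y _ ey] gy.
  subst L1 L2.
  case: (eqVneq (O x) (O y)) => [-> | ne]; [by left | right].
  case: (eqVneq (gcdn #|O x| #|O y|) 1%N) => g; last first.
    by left; rewrite /orbit_adj V1 V2 ne g.
  right.
  have [p [pp pd]] := gen_nontriv hom HO HP gx.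
  have [q [pq qd]] := gen_nontriv hom HO HP gy.
  have px : (p %| #|O x|)%N := dvdn_trans pd (gen_div hom HO p x).
  have qy : (q %| #|O y|)%N := dvdn_trans qd (gen_div hom HO q y).
  have pnq : p != q.
    by apply/eqP => e; move: g; apply/eqP; apply: (gcd_ne1 pq) => //; rewrite -e.
  have e1 : (p^').-elt (y.`_q).
    by apply: sub_p_elt (p_elt_constt q y) => r; rewrite !inE => /eqP ->; rewrite eq_sym.
  have e2 : (q^').-elt (x.`_p).
    by apply: sub_p_elt (p_elt_constt p x) => r; rewrite !inE => /eqP ->.
  have cm : commute (x.`_p) (y.`_q) := commO nG (p_elt_constt p x) e1.
  set z := x.`_p * y.`_q.
  have zp : z.`_p = x.`_p.
    rewrite /z (consttM _ cm) (constt_p_elt (p_elt_constt _ _)).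
    have h : (y.`_q).`_p = 1 by apply/constt1P.
    by rewrite h mulg1.
  have zq : z.`_q = y.`_q.
    rewrite /z (consttM _ cm) (constt_p_elt (p_elt_constt _ _)).
    have h : (x.`_p).`_q = 1 by apply/constt1P.
    by rewrite h mul1g.
  have pz : (p %| #|O z|)%N by apply: dvdn_trans (gen_div hom HO p z); rewrite zp.
  have qz : (q %| #|O z|)%N by apply: dvdn_trans (gen_div hom HO q z); rewrite zq.
  have Vz : O z \in orbit_vertices O.
    rewrite inE imset_f ?in_setT //=.
    apply: leq_trans (prime_gt1 pp) (dvdn_leq _ pz).
    by apply/card_gt0P; exists z.
  exists (O z); apply/andP; split; rewrite /orbit_adj ?V1 ?V2 ?Vz /=.
    rewrite (gcd_ne1 pp px pz) andbT.
    apply/eqP => e; move: g; apply/eqP; apply: (gcd_ne1 pq) => //; by rewrite e.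
  rewrite (gcd_ne1 pq qz qy) andbT.
  apply/eqP => e; move: g; apply/eqP; apply: (gcd_ne1 pp) => //; by rewrite -e.
split => // L1 L2 V1 V2.
case: (diam L1 L2 V1 V2) => [-> | [a | [L3 /andP[a b]]]].
- exact: connect0.
- exact: connect1.
- by apply: connect_trans (connect1 a) (connect1 b).
Qed.

Lemma pgroup_elts (T : finGroupType) (G : {group T}) (pi : nat_pred) :
  (forall s, s \in G -> exists n, pi.-nat n /\ s ^+ n = 1) -> pi.-group G.
Proof.
move=> h; apply/pgroupP => q pq qG.
have [s sG os] := Cauchy pq qG.
have [n [pn sn]] := h s sG.
rewrite -(pnatE _ pq) -os; apply: pnat_dvd pn.
by rewrite order_dvdn sn.
Qed.

Definition lamP (gT : finGroupType) (circ : gT -> gT -> gT) (H : is_skew_brace circ) a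
  : {perm gT} := perm (@blam_inj gT circ H a).

Lemma lamPM (gT : finGroupType) (circ : gT -> gT -> gT) (H : is_skew_brace circ) a b :
  lamP H a * lamP H b = lamP H (circ b a).
Proof. by apply/permP => x; rewrite permM !permE (blam_circ H). Qed.

Lemma lamP1 (gT : finGroupType) (circ : gT -> gT -> gT) (H : is_skew_brace circ) :
  lamP H 1 = 1.
Proof. by apply/permP => x; rewrite perm1 permE (blam_1 H). Qed.

Lemma lamPX (gT : finGroupType) (circ : gT -> gT -> gT) (H : is_skew_brace circ) a n :
  lamP H a ^+ n = lamP H (cpow circ a n).
Proof.
elim: n => [|n IH]; first by rewrite expg0 /= lamP1.
by rewrite expgSr IH lamPM.
Qed.

Lemma lam_gs (gT : finGroupType) (circ : gT -> gT -> gT) (H : is_skew_brace circ)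
  (S : {group gT}) :
  (forall x y, x \in S -> y \in S -> circ x y \in S) ->
  group_set [set lamP H a | a in S].
Proof.
move=> Sc; apply/group_setP; split.
  by apply/imsetP; exists 1; rewrite ?group1 ?lamP1.
move=> _ _ /imsetP[x xS ->] /imsetP[y yS ->]; rewrite lamPM.
by apply/imsetP; exists (circ y x) => //; apply: Sc.
Qed.

Lemma Lambda_part (gT : finGroupType) (circ : gT -> gT -> gT) (H : is_skew_brace circ)
  (lnil : left_nilpotent circ) (nG : nilpotent [set: gT]) :
  connected_diam_le2 (Lambda_graph_vertices circ).
Proof.
have gT_ : group_set [set lamP H a | a in [set: gT]].
  by apply: lam_gs => *; exact: in_setT.
apply: (@gen_main gT nG (Group gT_) (lam_orbit circ)).
- move=> _ /imsetP[a _ ->] x y; rewrite !permE; exact: (blamM H).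
- move=> x; apply/setP => y; apply/imsetP/imsetP => [[a _ ->]|[s /imsetP[a _ ->] ->]].
    by exists (lamP H a); [apply/imsetP; exists a | rewrite permE].
  by exists a; rewrite ?permE.
move=> pi y py.
have gpi : group_set [set lamP H a | a in 'O_pi([set: gT])].
  by apply: lam_gs => x z; apply: (circO H).
set L := Group gpi.
have -> : lam_orbit circ y = orbit 'P L y.
  apply/setP => w; apply/imsetP/imsetP => [[a _ ->]|[s /imsetP[a aO ->] ->]].
    exists (lamP H (a.`_pi)); first by apply/imsetP; exists (a.`_pi); rewrite ?(memO _ nG) ?p_elt_constt.
    by rewrite /= apermE permE (blam_constt H nG lnil a py).
  by exists a; rewrite ?in_setT // /= apermE permE.
rewrite card_orbit; apply: pnat_dvd (dvdn_indexg _ _) _.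
apply: pgroup_elts => _ /imsetP[a aO ->].
exists #|'O_pi([set: gT])|; split; first exact: (pcore_pgroup pi [set: gT]).
by rewrite lamPX (cpowO H nG) ?lamP1 // -(memO _ nG).
Qed.

Lemma th_inj (gT : finGroupType) (circ : gT -> gT -> gT) (H : is_skew_brace circ) (a b : gT) :
  injective (fun x => (blam circ b x) ^ a^-1).
Proof. by move=> x y /conjg_inj /(blam_inj H). Qed.

Definition thP (gT : finGroupType) (circ : gT -> gT -> gT) (H : is_skew_brace circ) a b
  : {perm gT} := perm (@th_inj gT circ H a b).

Lemma blam_conj (gT : finGroupType) (circ : gT -> gT -> gT) (H : is_skew_brace circ) c u v :
  blam circ c (u ^ v) = (blam circ c u) ^ (blam circ c v).
Proof. by rewrite !conjgE !(blamM H) (blamV H). Qed.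

Lemma thPM (gT : finGroupType) (circ : gT -> gT -> gT) (H : is_skew_brace circ) a b a' b' :
  thP H a b * thP H a' b' = thP H (a' * blam circ b' a) (circ b' b).
Proof.
apply/permP => x; rewrite permM !permE (blam_conj H) (blam_circ H) -conjgM.
by rewrite invMg (blamV H).
Qed.

Lemma thP1 (gT : finGroupType) (circ : gT -> gT -> gT) (H : is_skew_brace circ) :
  thP H 1 1 = 1.
Proof. by apply/permP => x; rewrite perm1 permE (blam_1 H) invg1 conjg1. Qed.

Lemma th_gs (gT : finGroupType) (circ : gT -> gT -> gT) (H : is_skew_brace circ)
  (S : {group gT}) :
  (forall x y, x \in S -> y \in S -> circ x y \in S) ->
  (forall x y, x \in S -> y \in S -> blam circ x y \in S) ->
  group_set [set thP H a b | a in S, b in S].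
Proof.
move=> Sc Sl; apply/group_setP; split.
  by apply/imset2P; exists 1 1; rewrite ?group1 ?thP1.
move=> _ _ /imset2P[a b aS bS ->] /imset2P[a' b' aS' bS' ->]; rewrite thPM.
apply/imset2P; exists (a' * blam circ b' a) (circ b' b) => //.
  by rewrite groupM // Sl.
by apply: Sc.
Qed.

Lemma Theta_part (gT : finGroupType) (circ : gT -> gT -> gT) (H : is_skew_brace circ)
  (lnil : left_nilpotent circ) (nG : nilpotent [set: gT]) :
  connected_diam_le2 (Theta_graph_vertices circ).
Proof.
have thE : forall a b c, a * blam circ b c * a^-1 = thP H a b c.
  by move=> a b c; rewrite permE conjgE invgK ?mulgA.
have gT_ : group_set [set thP H a b | a in [set: gT], b in [set: gT]].
  by apply: th_gs => *; exact: in_setT.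
apply: (@gen_main gT nG (Group gT_) (theta_orbit circ)).
- move=> _ /imset2P[a b _ _ ->] x y; rewrite !permE (blamM H); exact: conjMg.
- move=> x; apply/setP => y; apply/imset2P/imsetP => [[a b _ _ ->]|[s /imset2P[a b _ _ ->] ->]].
    by exists (thP H a b); [apply/imset2P; exists a b | rewrite thE].
  by exists a b; rewrite ?thE.
move=> pi y py.
have gpi : group_set [set thP H a b | a in 'O_pi([set: gT]), b in 'O_pi([set: gT])].
  apply: th_gs => x z xO zO; first exact: (circO H).
  by rewrite (memO _ nG) (blam_pelt H) // -(memO _ nG).
set L := Group gpi.
have -> : theta_orbit circ y = orbit 'P L y.
  apply/setP => w; apply/imset2P/imsetP => [[a b _ _ ->]|[s /imset2P[a b aO bO ->] ->]].
    exists (thP H (a.`_pi) (b.`_pi)).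
      by apply/imset2P; exists (a.`_pi) (b.`_pi); rewrite ?(memO _ nG) ?p_elt_constt.
    rewrite /= apermE -thE -(blam_constt H nG lnil b py).
    have key : forall u, pi.-elt u -> a * u * a^-1 = a.`_pi * u * (a.`_pi)^-1.
      move=> u pu; have cm : commute u (a.`_pi^') := commO nG pu (p_elt_constt _ _).
      rewrite -{1 2}(consttC pi a) invMg !mulgA -(mulgA _ _ u) -cm.
      by rewrite (mulgA _ u) mulgK.
    by rewrite key // (blam_pelt H).
  by exists a b; rewrite ?in_setT // /= apermE thE.
rewrite card_orbit; apply: pnat_dvd (dvdn_indexg _ _) _.
apply: pgroup_elts => _ /imset2P[a b aO bO ->].
set N := #|'O_pi([set: gT])|.
have pow : forall n, exists2 a', a' \in 'O_pi([set: gT]) &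
     thP H a b ^+ n = thP H a' (cpow circ b n).
  elim=> [|n [a' aO' IH]]; first by exists 1; rewrite ?group1 // expg0 thP1.
  exists (a * blam circ b a'); last by rewrite expgSr IH thPM.
  by rewrite groupM // (memO _ nG) (blam_pelt H) // -(memO _ nG).
have [a' aO' eN] := pow N.
have pow1 : forall m, thP H a' 1 ^+ m = thP H (a' ^+ m) 1.
  elim=> [|m IH]; first by rewrite !expg0 thP1.
  by rewrite expgSr IH thPM (blam_1 H) (sb_c1l H) -expgS.
exists (N * #[a'])%N; split.
  rewrite pnatM; apply/andP; split; first exact: (pcore_pgroup pi [set: gT]).
  by have := aO'; rewrite (memO _ nG).
rewrite expgM eN (cpowO H nG) -?(memO _ nG) // pow1 expg_order thP1 //.
Qed.

Theorem mainTheorem4 (gT : finGroupType) (circ : gT -> gT -> gT) :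
  is_skew_brace circ ->
  left_nilpotent circ ->
  nilpotent [set: gT] ->
  connected_diam_le2 (Lambda_graph_vertices circ) /\
  connected_diam_le2 (Theta_graph_vertices circ).
Proof.
move=> H lnil nG; split; [exact: Lambda_part | exact: Theta_part].
Qed.
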